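(* Let $n\ge2$ be an integer and let $\mathfrak{R}$ be a unital alternative ring which is $2$-, $3$-, $(n-1)$- and $(n-3)$-torsion free, with a nontrivial idempotent $e_1$, $e_2=1-e_1$, and Peirce decomposition $\mathfrak{R}=\mathfrak{R}_{11}\oplus\mathfrak{R}_{12}\oplus\mathfrak{R}_{21}\oplus\mathfrak{R}_{22}$, satisfying: (1) if $i\ne j$, $x_{ij}\in\mathfrak{R}_{ij}$ and $x_{ij}\mathfrak{R}_{ji}=0$, then $x_{ij}=0$; (2) if $x_{11}\in\mathfrak{R}_{11}$ and $x_{11}\mathfrak{R}_{12}=0$ or $\mathfrak{R}_{21}x_{11}=0$, then $x_{11}=0$; (3) if $x_{22}\in\mathfrak{R}_{22}$ and $\mathfrak{R}_{12}x_{22}=0$ or $x_{22}\mathfrak{R}_{21}=0$, then $x_{22}=0$; (4) if $z\in\mathcal{Z}(\mathfrak{R})$, $z\ne0$, then $z\mathfrak{R}=\mathfrak{R}$. Let $\mathcal{D}\colon\mathfrak{R}\to\mathfrak{R}$ be a multiplicative Lie $n$-derivation satisfying (a) $e_2\mathcal{D}(\mathfrak{R}_{11})e_2\subseteq\mathcal{Z}(\mathfrak{R})e_2$, (b) $e_1\mathcal{D}(\mathfrak{R}_{22})e_1\subseteq\mathcal{Z}(\mathfrak{R})e_1$, (c) $\mathcal{D}(\mathfrak{R}_{ij})\subseteq\mathfrak{R}_{ij}$ for $i\ne j$. Put $y=e_1\mathcal{D}(e_1)e_2+e_2\mathcal{D}(e_1)e_1$, $z=e_1$, and $f_{y,z}=[L_y,L_z]+[L_y,R_z]+[R_y,R_z]$.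 Then $\mathcal{D}(e_1)-f_{y,z}(e_1)\in\mathcal{Z}(\mathfrak{R})$.
   Context: $\mathfrak{R}$ is alternative if $(x,x,y)=0=(y,x,x)$ for all $x,y$, where $(x,y,z)=(xy)z-x(yz)$ (not necessarily associative). $k$-torsion free: $kx=0\Rightarrow x=0$. $[x,y]=xy-yx$; $\mathcal{Z}(\mathfrak{R})=\{r:[r,x]=0\ \forall x\}$; $\mathcal{Z}(\mathfrak{R})e_i=\{ze_i:z\in\mathcal{Z}(\mathfrak{R})\}$. $p_1(x)=x$, $p_n(x_1,\dots,x_n)=[p_{n-1}(x_1,\dots,x_{n-1}),x_n]$; a (not necessarily additive) map $\mathcal{D}$ is a multiplicative Lie $n$-derivation if $\mathcal{D}(p_n(x_1,\dots,x_n))=\sum_{i=1}^n p_n(x_1,\dots,\mathcal{D}(x_i),\dots,x_n)$ for all $x_i$. $\mathfrak{R}_{ij}=e_i\mathfrak{R}e_j$. $L_y(x)=yx$, $R_y(x)=xy$ are the left and right multiplication operators, and $[S,T]=S\circ T-T\circ S$ for operators $S,T$ on $\mathfrak{R}$. *)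

(* Defs.v *)
From HB Require Import structures.
From mathcomp Require Import all_boot all_order all_algebra.
Set Implicit Arguments. Unset Strict Implicit. Unset Printing Implicit Defensive.
Import GRing.Theory.
Local Open Scope ring_scope.

Record alt_ring (R : zmodType) := AltRing {
  amul : R -> R -> R;
  aone : R;
  amulDl : forall x y z, amul (x + y) z = amul x z + amul y z;
  amulDr : forall x y z, amul x (y + z) = amul x y + amul x z;
  amul1l : forall x, amul aone x = x;
  amul1r : forall x, amul x aone = x;
  aleft_alt : forall x y, amul (amul x x) y = amul x (amul x y);
  aright_alt : forall x y, amul (amul y x) x = amul y (amul x x)
}.

Section Defs.
Variables (R : zmodType) (A : alt_ring R).
Local Notation m := (amul A).

Definition assoc (x y z : R) : R := m (m x y) z - m x (m y z).

Definition comm (x y : R) : R := m x y - m y x.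

Definition torsion_free (k : int) : Prop :=
  k != 0 -> forall x : R, x *~ k = 0 -> x = 0.

Definition central (r : R) : Prop := forall x, comm r x = 0.

Definition in_Ze (e w : R) : Prop := exists z, central z /\ w = m z e.

Definition peirce (ei ej x : R) : Prop := exists r, x = m (m ei r) ej.

(* p_1(x_0) = x_0, p_{k+1}(x_0..x_k) = [p_k(x_0..x_{k-1}), x_k];
   lie_p k x = p_{k+1}(x 0, ..., x k) *)
Fixpoint lie_p (k : nat) (x : nat -> R) : R :=
  match k with
  | 0 => x 0%N
  | k'.+1 => comm (lie_p k' x) (x k)
  end.

Definition lie_n_derivation (n : nat) (D : R -> R) : Prop :=
  forall x : nat -> R,
    D (lie_p n.-1 x) =
    \sum_(i < n) lie_p n.-1 (fun j => if j == nat_of_ord i then D (x j) else x j).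

Definition Lop (y : R) : R -> R := fun x => m y x.
Definition Rop (y : R) : R -> R := fun x => m x y.
Definition op_comm (S T : R -> R) : R -> R := fun x => S (T x) - T (S x).

Definition f_yz (y z : R) : R -> R := fun x =>
  op_comm (Lop y) (Lop z) x + op_comm (Lop y) (Rop z) x + op_comm (Rop y) (Rop z) x.

End Defs.

(* Main.v *)
Require Import Defs.
From mathcomp Require Import all_boot all_order all_algebra.
From mathcomp Require Import zify.
Import GRing.Theory.
Local Open Scope ring_scope.
Set Implicit Arguments. Unset Strict Implicit. Unset Printing Implicit Defensive.
Section Gen.
Variable (R : zmodType).

Lemma f0 (f : R -> R) : (forall a b, f (a+b) = f a + f b) -> f 0 = 0.
Proof. move=> fD; have := fD 0 0; rewrite addr0.
move/(congr1 (fun v => v - f 0)); rewrite subrr addrK; by move/esym. Qed.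

Lemma fN (f : R -> R) : (forall a b, f (a+b) = f a + f b) -> forall a, f (- a) = - f a.
Proof. move=> fD a; apply/eqP; rewrite -addr_eq0 -fD addNr; apply/eqP; exact: f0. Qed.

Lemma fB (f : R -> R) : (forall a b, f (a+b) = f a + f b) -> forall a b, f (a - b) = f a - f b.
Proof. by move=> fD a b; rewrite fD (fN fD). Qed.

Lemma fMn (f : R -> R) : (forall a b, f (a+b) = f a + f b) -> forall a k, f (a *+ k) = f a *+ k.
Proof. move=> fD a; elim=> [|k IH]; first by rewrite !mulr0n (f0 fD).
by rewrite !mulrS fD IH. Qed.

Lemma fMz (f : R -> R) : (forall a b, f (a+b) = f a + f b) -> forall a k, f (a *~ k) = f a *~ k.
Proof. move=> fD a [k|k]; first by rewrite -!pmulrn (fMn fD).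
by rewrite NegzE !mulrNz (fN fD) -!pmulrn (fMn fD). Qed.

Lemma fsum (f : R -> R) : (forall a b, f (a+b) = f a + f b) -> forall n (F : 'I_n -> R),
  f (\sum_(i < n) F i) = \sum_(i < n) f (F i).
Proof. move=> fD n F; exact: (big_morph f fD (f0 fD)). Qed.
End Gen.

Lemma swap4 (R : zmodType) (x y u v : R) : x + y = u + v -> x - u = -(y - v).
Proof. move=> H; rewrite opprB; apply/(@addIr _ u); rewrite subrK; apply/(@addIr _ y).
by rewrite H addrAC subrK addrC. Qed.
Lemma canc4 (R : zmodType) (p q x y u v : R) : p + x + (y + q) = p + u + (v + q) -> x + y = u + v.
Proof. rewrite -!addrA => /addrI; rewrite !addrA => /addIr. done. Qed.
Lemma lin1 (R : zmodType) (x p q r : R) : p - x = - (r - q) -> x = p - q + r.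
Proof. move=> H; have -> : x = p - (p - x) by rewrite opprB addrC subrK.
by rewrite H opprK addrA addrAC. Qed.
Lemma lin2 (R : zmodType) (x p q r : R) : x - p = -(r - q) -> x = p + q - r.
Proof. move=> H; have -> : x = x - p + p by rewrite subrK.
by rewrite H opprB addrC addrA. Qed.
Lemma parity_aux n i : (2 <= n)%N -> ((~~ odd n : nat) < i)%N -> (i <= n.-1)%N ->
  odd (n.-2 - (~~ odd n : nat)) = true.
Proof.
case: n => [|[|n]] // _ /=.
case Ho: (odd n) => /=; first by rewrite subn0.
move=> hqi hiN; rewrite oddB ?Ho //; lia.
Qed.
Lemma sum_if (R : zmodType) n q (a b : R) : (q < n)%N ->
  \sum_(i < n) (if (i : nat) == q then a else b) = a + b *+ n.-1.
Proof.
move=> hq; rewrite (bigD1 (Ordinal hq)) //= eqxx; congr (_ + _).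
rewrite (eq_bigr (fun _ => b)); last first.
  move=> i hi; rewrite ifN //; apply: contra hi => /eqP h; apply/eqP/val_inj; exact: h.
by rewrite sumr_const cardC1 card_ord.
Qed.
Section Alt.
Variables (R : zmodType) (A : alt_ring R).
Local Notation m := (amul A).
Lemma assocL a b c : assoc A a b c = - assoc A b a c.
Proof.
have H := aleft_alt A (a+b) c.
rewrite !(amulDl, amulDr) !aleft_alt in H.
rewrite /assoc; apply: swap4; exact: canc4 H.
Qed.
Lemma assocR a b c : assoc A a b c = - assoc A a c b.
Proof.
have H := aright_alt A (b+c) a.
rewrite !(amulDl, amulDr) !aright_alt in H.
rewrite /assoc; apply: swap4; move/canc4: H => H; by rewrite addrC H.
Qed.

Lemma m0l a : m 0 a = 0. Proof. exact: (@f0 R (fun x => m x a) (fun x y => amulDl A x y a)). Qed.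
Lemma m0r a : m a 0 = 0. Proof. exact: (@f0 R (fun x => m a x) (fun x y => amulDr A a x y)). Qed.
Lemma mNl a b : m (- a) b = - m a b. Proof. exact: (@fN R (fun x => m x b) (fun x y => amulDl A x y b)). Qed.
Lemma mNr a b : m a (- b) = - m a b. Proof. exact: (@fN R (fun x => m a x) (fun x y => amulDr A a x y)). Qed.
Lemma mBl a c b : m (a - c) b = m a b - m c b. Proof. exact: (@fB R (fun x => m x b) (fun x y => amulDl A x y b)). Qed.
Lemma mBr a b c : m a (b - c) = m a b - m a c. Proof. exact: (@fB R (fun x => m a x) (fun x y => amulDr A a x y)). Qed.
Lemma mMzl a b k : m (a *~ k) b = m a b *~ k. Proof. exact: (@fMz R (fun x => m x b) (fun x y => amulDl A x y b)). Qed.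
Lemma mMzr a b k : m a (b *~ k) = m a b *~ k. Proof. exact: (@fMz R (fun x => m a x) (fun x y => amulDr A a x y)). Qed.

Lemma commMzl a b k : comm A (a *~ k) b = comm A a b *~ k.
Proof. by rewrite /comm mMzl mMzr mulrzBl. Qed.

Lemma central_assoc z : torsion_free R 3 -> central A z -> forall a b, assoc A a b z = 0.
Proof.
move=> T3 Hz a b.
have Ez x : m x z = m z x by apply/esym/eqP; rewrite -subr_eq0; apply/eqP; exact: Hz.
have E1 := Ez (m a b). have E2 := Ez b. have E3 := Ez a.
have K : assoc A a b z + assoc A z a b = assoc A a z b.
  rewrite /assoc E1 E2 E3 addrC addrA subrK. done.
rewrite (assocL z a b) (assocR a z b) opprK in K.
apply: T3 => //.
have -> : (3 : int) = 1 + 1 + 1 by [].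
rewrite !mulrzDr mulr1z.
by rewrite K addNr. 
Qed.

Variable e : R.
Hypothesis He : m e e = e.
Local Notation f := (aone A - e).

Lemma Hf : m f f = f.
Proof. by rewrite mBl !mBr !amul1l !amul1r He subrr subr0. Qed.
Lemma mef : m e f = 0. Proof. by rewrite mBr amul1r He subrr. Qed.
Lemma mfe : m f e = 0. Proof. by rewrite mBl amul1l He subrr. Qed.
Lemma lee a : m e (m e a) = m e a. Proof. by rewrite -aleft_alt He. Qed.
Lemma ree a : m (m a e) e = m a e. Proof. by rewrite aright_alt He. Qed.
Lemma flex a : m e (m a e) = m (m e a) e.
Proof.
have : assoc A e a e = 0 by rewrite assocL /assoc aright_alt subrr oppr0.
by move/eqP; rewrite subr_eq0 => /eqP ->.
Qed.
Lemma lef a : m e (m f a) = 0. Proof. by rewrite mBl amul1l mBr lee subrr. Qed.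
Lemma rfe a : m (m a f) e = 0. Proof. by rewrite mBr amul1r mBl ree subrr. Qed.
Lemma midf a : m e (m a f) = m (m e a) f.
Proof. by rewrite !mBr !amul1r flex. Qed.
Lemma one_ef : e + f = aone A. Proof. by rewrite addrC subrK. Qed.

Definition eig (x : R) (al be : int) := m e x = x *~ al /\ m x e = x *~ be.

Lemma eig11 r : eig (m (m e r) e) 1 1.
Proof. by rewrite /eig !mulr1z flex lee ree. Qed.
Lemma eig12 r : eig (m (m e r) f) 1 0.
Proof. by rewrite /eig mulr1z mulr0z midf lee rfe. Qed.
Lemma eig21 r : eig (m (m f r) e) 0 1.
Proof. by rewrite /eig mulr1z mulr0z flex lef m0l ree. Qed.
Lemma eig22 r : eig (m (m f r) f) 0 0.
Proof. by rewrite /eig mulr0z midf lef m0l rfe. Qed.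

Lemma eig_mul a b al be ga de : eig a al be -> eig b ga de ->
  eig (m a b) (al - ga + be) (de + ga - be).
Proof.
move=> [Ha1 Ha2] [Hb1 Hb2]; split.
- have := assocL e a b.
  rewrite /assoc Ha1 Ha2 Hb1 !mMzl !mMzr => H.
  by rewrite (lin1 H) -mulrzBr -mulrzDr.
- have := assocR a b e.
  rewrite /assoc Ha2 Hb1 Hb2 !mMzl !mMzr => H.
  by rewrite (lin2 H) -mulrzDr -mulrzBr.
Qed.

Definition p12 x := m (m e x) f.
Lemma p12D x y : p12 (x + y) = p12 x + p12 y.
Proof. by rewrite /p12 (amulDr A e x y) amulDl. Qed.
Lemma p12B x y : p12 (x - y) = p12 x - p12 y. Proof. exact: (fB p12D). Qed.
Lemma p12N x : p12 (- x) = - p12 x. Proof. exact: (fN p12D). Qed.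
Lemma p12Mz x k : p12 (x *~ k) = p12 x *~ k. Proof. exact: (fMz p12D). Qed.
Lemma p12sum n (F : 'I_n -> R) : p12 (\sum_(i < n) F i) = \sum_(i < n) p12 (F i).
Proof. exact: (fsum p12D). Qed.

Lemma p12_eig x al be : eig x al be -> p12 x = x *~ (al - be * al).
Proof.
move=> [H1 H2]; rewrite /p12 mBr amul1r H1 mMzl H2 -mulrzA mulrzBr. done.
Qed.
Lemma ref a : m (m a e) f = 0. Proof. by rewrite mBr amul1r ree subrr. Qed.
Lemma p12_comme a : p12 (comm A a e) = - p12 a.
Proof. by rewrite /comm p12B /p12 flex ref lee sub0r. Qed.
Lemma comm_eig_r x al be : eig x al be -> comm A x e = x *~ (be - al).
Proof. by move=> [H1 H2]; rewrite /comm H1 H2 mulrzBr. Qed.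
Lemma comm_eig_l x al be : eig x al be -> comm A e x = x *~ (al - be).
Proof. by move=> [H1 H2]; rewrite /comm H1 H2 mulrzBr. Qed.
Lemma eig_Mz x al be k : eig x al be -> eig (x *~ k) al be.
Proof. by move=> [H1 H2]; rewrite /eig mMzr mMzl H1 H2 -!mulrzA mulrC [be * k]mulrC. Qed.
Lemma decomp d : d = m (m e d) e + m (m e d) f + (m (m f d) e + m (m f d) f).
Proof.
by rewrite -!amulDr one_ef !amul1r -amulDl one_ef amul1l.
Qed.

Lemma p12_xd x d : eig x 1 0 -> p12 (m x d) = m x (m (m f d) f).
Proof.
move=> Hx; rewrite {1}(decomp d).
have E1 := p12_eig (eig_mul Hx (eig11 d)). have E2 := p12_eig (eig_mul Hx (eig12 d)).
have E3 := p12_eig (eig_mul Hx (eig21 d)). have E4 := p12_eig (eig_mul Hx (eig22 d)).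
set d11 := m (m e d) e in E1 *; set d12 := m (m e d) f in E2 *.
set d21 := m (m f d) e in E3 *; set d22 := m (m f d) f in E4 *.
rewrite !amulDr !p12D E1 E2 E3 E4.
have h1 : (1 - 1 + 0 - (1 + 1 - 0) * (1 - 1 + 0) : int) = 0 by [].
have h2 : (1 - 1 + 0 - (0 + 1 - 0) * (1 - 1 + 0) : int) = 0 by [].
have h3 : (1 - 0 + 0 - (1 + 0 - 0) * (1 - 0 + 0) : int) = 0 by [].
have h4 : (1 - 0 + 0 - (0 + 0 - 0) * (1 - 0 + 0) : int) = 1 by [].
rewrite ?h1 ?h2 ?h3 ?h4.
by rewrite !mulr0z mulr1z !add0r.
Qed.
Lemma p12_dx x d : eig x 1 0 -> p12 (m d x) = m (m (m e d) e) x.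
Proof.
move=> Hx; rewrite {1}(decomp d).
have E1 := p12_eig (eig_mul (eig11 d) Hx). have E2 := p12_eig (eig_mul (eig12 d) Hx).
have E3 := p12_eig (eig_mul (eig21 d) Hx). have E4 := p12_eig (eig_mul (eig22 d) Hx).
set d11 := m (m e d) e in E1 *; set d12 := m (m e d) f in E2 *.
set d21 := m (m f d) e in E3 *; set d22 := m (m f d) f in E4 *.
rewrite !amulDl !p12D E1 E2 E3 E4.
have h1 : (1 - 1 + 1 - (0 + 1 - 1) * (1 - 1 + 1) : int) = 1 by [].
have h2 : (1 - 1 + 0 - (0 + 1 - 0) * (1 - 1 + 0) : int) = 0 by [].
have h3 : (0 - 1 + 1 - (0 + 1 - 1) * (0 - 1 + 1) : int) = 0 by [].
have h4 : (0 - 1 + 0 - (0 + 1 - 0) * (0 - 1 + 0) : int) = 0 by [].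
rewrite ?h1 ?h2 ?h3 ?h4.
by rewrite !mulr0z mulr1z !addr0.
Qed.

Lemma key_consequence x d : eig x 1 0 -> p12 (comm A x d) = 0 ->
  m x (m (m f d) f) = m (m (m e d) e) x.
Proof.
move=> Hx; rewrite /comm p12B p12_xd // p12_dx //.
by move/eqP; rewrite subr_eq0 => /eqP.
Qed.

Lemma lie_ext k t t' : (forall j, (j <= k)%N -> t j = t' j) -> lie_p A k t = lie_p A k t'.
Proof.
elim: k => [|k IH] H /=; first exact: H.
rewrite IH; last by move=> j hj; apply: H; rewrite (leq_trans hj).
by rewrite H.
Qed.

Lemma tail_exact K t : (forall j, (K < j)%N -> t j = e) -> eig (lie_p A K t) 1 0 ->
  forall d, lie_p A (K + d) t = lie_p A K t *~ ((-1) ^+ d).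
Proof.
move=> Ht Hx; elim=> [|d IH]; first by rewrite addn0 expr0 mulr1z.
rewrite addnS /= IH Ht; last by rewrite ltnS leq_addr.
by rewrite commMzl (comm_eig_r Hx) sub0r -mulrzA exprS mulrC.
Qed.

Lemma tail_p12 K t : (forall j, (K < j)%N -> t j = e) ->
  forall d, p12 (lie_p A (K + d) t) = p12 (lie_p A K t) *~ ((-1) ^+ d).
Proof.
move=> Ht; elim=> [|d IH]; first by rewrite addn0 expr0 mulr1z.
rewrite addnS /= Ht; last by rewrite ltnS leq_addr.
by rewrite p12_comme IH exprS mulN1r mulrNz.
Qed.

Definition sq (q : nat) (y : R) := fun j : nat => if j == q then y else e.

Lemma sq_tail q y : forall j, (q < j)%N -> sq q y j = e.
Proof. by move=> j hj; rewrite /sq gtn_eqF. Qed.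

Lemma sq_val q y : (q <= 1)%N -> eig y 1 0 -> lie_p A q (sq q y) = y.
Proof.
case: q => [|[|//]] _ Hy /=; first by rewrite /sq.
by rewrite /sq /= (comm_eig_l Hy) subr0 mulr1z.
Qed.

Lemma sq_full n y : (2 <= n)%N -> eig y 1 0 -> lie_p A n.-1 (sq (~~ odd n) y) = y.
Proof.
move=> hn Hy.
have hq : (~~ odd n <= n.-1)%N by case: (odd n); case: n hn => [|[|n]].
have hq1 : (~~ odd n <= 1)%N by case: (odd n).
rewrite -(subnKC hq) (tail_exact (@sq_tail _ y)) sq_val //.
rewrite -signr_odd.
suff -> : odd (n.-1 - ~~ odd n) = false by rewrite expr0 mulr1z.
case: n hn {hq hq1} => [|[|n]] // _ /=.
case Ho: (odd n) => /=; first by rewrite Ho.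
have -> : (n.+1 - 1 = n)%N by rewrite subSS subn0.
by rewrite Ho.
Qed.

Lemma comm_anti a b : comm A a b = - comm A b a.
Proof. by rewrite /comm opprB. Qed.

Lemma term_val n D x (i : nat) : (2 <= n)%N -> (i < n)%N -> eig x 1 0 -> eig (D x) 1 0 ->
  p12 (lie_p A n.-1 (fun j => if j == i then D (sq (~~ odd n) x j) else sq (~~ odd n) x j))
  = if i == (~~ odd n : nat) then D x else - p12 (comm A x (D e)).
Proof.
move=> hn hi Hx HDx.
have hq1 : ((~~ odd n : nat) <= 1)%N by case: (odd n).
set q : nat := (~~ odd n : nat) in hq1 *.
set t := fun j => if j == i then D (sq q x j) else sq q x j.
case: (ltngtP i q) => [hiq | hqi | Eiq].
- have q1 : q = 1%N by lia.
  have i0 : i = 0%N by lia.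
  have oddn : odd n = false by move: q1; rewrite /q; case: (odd n).
  have hN : (1 <= n.-1)%N by lia.
  have Ht : forall j, (1 < j)%N -> t j = e.
    move=> j hj; rewrite /t i0 (gtn_eqF (ltn_trans _ hj)) // sq_tail // q1 //.
  rewrite -(subnKC hN) (tail_p12 Ht) /= /t i0 /= /sq q1 /=.
  rewrite comm_anti p12N -signr_odd.
  have -> : odd (n.-1 - 1) = false.
    case: n hn oddn {hi hN Ht t q q1 hq1 hiq} => [|[|n]] // _ /=.
    by rewrite subSS subn0 negbK => ->.
  by rewrite expr0 mulr1z.
- have hi0 : (0 < i)%N by lia.
  have hiN : (i <= n.-1)%N by lia.
  have Ht : forall j, (i < j)%N -> t j = e.
    move=> j hj; rewrite /t (gtn_eqF hj) sq_tail //; exact: ltn_trans hqi hj.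
  rewrite -(subnKC hiN) (tail_p12 Ht).
  have L := erefl (lie_p A i.-1.+1 t); rewrite [in X in _ = X]/= prednK // in L.
  rewrite L /t eqxx /sq (gtn_eqF hqi).
  have -> : lie_p A i.-1 (fun j => if j == i then D (if j == q then x else e)
                           else if j == q then x else e) = lie_p A i.-1 (sq q x).
    apply: lie_ext => j hj; rewrite /sq ifN //; apply/negP => /eqP Ej; lia.
  have hqi1 : (q <= i.-1)%N by lia.
  rewrite -(subnKC hqi1) (tail_exact (@sq_tail _ x)) sq_val //.
  rewrite commMzl p12Mz -mulrzA -exprD -signr_odd.
  have -> : odd (i.-1 - q + (n.-1 - i)) = true.
    have -> : (i.-1 - q + (n.-1 - i) = n.-2 - q)%N by lia.
    exact: parity_aux hn hqi hiN.
  by rewrite expr1 mulrN1z.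
- rewrite ?eqxx.
  have -> : lie_p A n.-1 t = lie_p A n.-1 (sq q (D x)).
    by apply: lie_ext => j _; rewrite /t /sq Eiq; case: (j == q).
  rewrite /q sq_full // (p12_eig HDx).
  have -> : (1 - 0 * 1 : int) = 1 by [].
  by rewrite mulr1z.
Qed.

Lemma lie_key n D x : (2 <= n)%N -> lie_n_derivation A n D -> eig x 1 0 -> eig (D x) 1 0 ->
  torsion_free R (n%:Z - 1) -> p12 (comm A x (D e)) = 0.
Proof.
move=> hn HD Hx HDx T.
have H := HD (sq (~~ odd n) x).
rewrite sq_full // in H.
move/(congr1 p12): H; rewrite p12sum (p12_eig HDx).
under eq_bigr => i _ do rewrite term_val ?ltn_ord //.
rewrite sum_if; last by case: (odd n); lia.
have -> : (1 - 0 * 1 : int) = 1 by [].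
rewrite mulr1z => H.
have H0 : (- p12 (comm A x (D e))) *+ n.-1 = 0.
  by apply: (@addrI _ (D x)); rewrite -H addr0.
apply: T.
  by rewrite subr_eq0; case: n hn {HD H H0} => [|[|n']].
move: H0; rewrite mulNrn => /eqP; rewrite oppr_eq0 => /eqP.
have -> : (n%:Z - 1) = (n.-1)%:Z by case: n hn {HD H} => // n' _; rewrite intS addrC addKr.
by rewrite -pmulrn.
Qed.

Lemma eig_unf x al be : eig x al be -> m e x = x *~ al /\ m x e = x *~ be.
Proof. by []. Qed.

Lemma fyz_val d : f_yz A (m (m e d) f + m (m f d) e) e e = m (m e d) f + m (m f d) e.
Proof.
have [h1 h2] := eig12 d; have [h3 h4] := eig21 d.
set a := m (m e d) f in h1 h2 *; set b := m (m f d) e in h3 h4 *.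
rewrite /f_yz /op_comm /Lop /Rop He !amulDl !amulDr h1 h2 h3 h4 !mulr0z !mulr1z.
rewrite !add0r !amulDl h3 m0r mulr0z.
rewrite !m0l h2 h4 mulr0z mulr1z !addr0 !add0r !subr0 subrr addr0 addrC. done.
Qed.

Lemma central_comm z : central A z -> forall a, m z a = m a z.
Proof. by move=> Hz a; apply/eqP; rewrite -subr_eq0; apply/eqP; exact: Hz. Qed.

Lemma zassoc z : torsion_free R 3 -> central A z -> forall a b,
  m (m a z) b = m a (m z b) /\ m (m z a) b = m z (m a b).
Proof.
move=> T3 Hz a b.
have h1 : assoc A a z b = 0 by rewrite assocR central_assoc // oppr0.
have h2 : assoc A z a b = 0 by rewrite assocL h1 oppr0.
by move: h1 h2; rewrite /assoc => /eqP; rewrite subr_eq0 => /eqP -> /eqP; rewrite subr_eq0 => /eqP ->.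
Qed.

Lemma d11_eq d z : torsion_free R 3 -> central A z -> m (m f d) f = m z f ->
  (forall r, eig r 1 0 -> m r (m (m f d) f) = m (m (m e d) e) r) ->
  (forall x, (exists r0, x = m (m e r0) e) ->
     (forall r, (exists r0, r = m (m e r0) f) -> m x r = 0) \/
     (forall r, (exists r0, r = m (m f r0) e) -> m r x = 0) -> x = 0) ->
  m (m e d) e = m z e.
Proof.
move=> T3 Hz Ez Key H2.
have Zc := central_comm Hz.
have ZA := zassoc T3 Hz.
have ze : m (m e z) e = m z e by rewrite -Zc (proj2 (ZA e e)) He.
have : m (m e (d - z)) e = 0.
  apply: H2; first by exists (d - z).
  left => r [r0 Er].
  have Hr := eig12 r0; rewrite -Er in Hr.
  have [hr1 hr2] := Hr.
  have rf : m r f = r by rewrite mBr amul1r hr2 mulr0z subr0.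
  rewrite mBr mBl ze mBl -Key // Ez -(proj1 (ZA r f)) -[m r z]Zc (proj2 (ZA r f)) rf.
  by rewrite (proj2 (ZA e r)) hr1 mulr1z subrr.
by move/eqP; rewrite mBr mBl ze subr_eq0 => /eqP.
Qed.

Lemma final_eq d z : m (m e d) e = m z e -> m (m f d) f = m z f ->
  d - (m (m e d) f + m (m f d) e) = z.
Proof.
move=> E1 E2; rewrite {1}(decomp d) E1 E2.
rewrite [m (m f d) e + _]addrC addrACA addrK -amulDr one_ef amul1r. done.
Qed.
End Alt.

Theorem lemma3p5 (R : zmodType) (A : alt_ring R) (n : nat) (e1 : R)
  (D : R -> R) :
  (2 <= n)%N ->
  torsion_free R 2 -> torsion_free R 3 ->
  torsion_free R (n%:Z - 1) -> torsion_free R (n%:Z - 3) ->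
  (* e1 is a nontrivial idempotent *)
  amul A e1 e1 = e1 -> e1 != 0 -> e1 != aone A ->
  let e2 := aone A - e1 in
  let P := peirce A in
  (* (1) *)
  (forall x, P e1 e2 x -> (forall r, P e2 e1 r -> amul A x r = 0) -> x = 0) ->
  (forall x, P e2 e1 x -> (forall r, P e1 e2 r -> amul A x r = 0) -> x = 0) ->
  (* (2) *)
  (forall x, P e1 e1 x ->
     (forall r, P e1 e2 r -> amul A x r = 0) \/
     (forall r, P e2 e1 r -> amul A r x = 0) -> x = 0) ->
  (* (3) *)
  (forall x, P e2 e2 x ->
     (forall r, P e1 e2 r -> amul A r x = 0) \/
     (forall r, P e2 e1 r -> amul A x r = 0) -> x = 0) ->
  (* (4) *)
  (forall z, central A z -> z != 0 -> forall r, exists s, r = amul A z s) ->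
  lie_n_derivation A n D ->
  (* (a) *)
  (forall x, P e1 e1 x -> in_Ze A e2 (amul A (amul A e2 (D x)) e2)) ->
  (* (b) *)
  (forall x, P e2 e2 x -> in_Ze A e1 (amul A (amul A e1 (D x)) e1)) ->
  (* (c) *)
  (forall x, P e1 e2 x -> P e1 e2 (D x)) ->
  (forall x, P e2 e1 x -> P e2 e1 (D x)) ->
  let y := amul A (amul A e1 (D e1)) e2 + amul A (amul A e2 (D e1)) e1 in
  central A (D e1 - f_yz A y e1 e1).
Proof.
move=> hn T2 T3 Tn1 Tn3 He e1n0 e1n1 e2 P H1a H1b H2 H3 H4 HD Ha Hb Hc12 Hc21 y.
rewrite /y /e2.
have [z [Hz Ez]] : in_Ze A e2 (amul A (amul A e2 (D e1)) e2).
  by apply: Ha; exists e1; rewrite He He.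
rewrite /e2 in Ez.
have Key : forall r, eig A e1 r 1 0 ->
    amul A r (amul A (amul A (aone A - e1) (D e1)) (aone A - e1))
    = amul A (amul A (amul A e1 (D e1)) e1) r.
  move=> r Hr.
  have Pr : P e1 e2 r.
    exists r; rewrite -/(p12 A e1 r) (p12_eig Hr).
    have -> : (1 - 0 * 1 : int) = 1 by []. by rewrite mulr1z.
  have HDr : eig A e1 (D r) 1 0 by have [r1 ->] := Hc12 r Pr; exact: eig12.
  apply: key_consequence => //.
  exact (lie_key He hn HD Hr HDr Tn1).
have E11 := d11_eq He T3 Hz Ez Key H2.
by rewrite (fyz_val He) (final_eq E11 Ez).
Qed.
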